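(* Let $\mathcal{S}=(S,\boldsymbol{\tau})$ be a species tree on $X=\{x_1,\ldots,x_n\}$ with height $\eta=\tau_0+\cdots+\tau_{n-2}$, let $h$ be a gene tree history evolving within $\mathcal{S}$ (with given coalescent times), and let $0<\eta'\le\eta$. Let $h^{\mathit{top}}_{\mathit{ext}}$ be the extended top part of $h$ concerning cut height $\eta'$ and let $h^1,\ldots,h^k$ be the chopped parts of $h$ concerning cut height $\eta'$. Then for each $x_i\in X$, $$FP_h(x_i) = FP_{h^i}(x_i) + FP_{h^{\mathit{top}}_{\mathit{ext}}}(v_{x_i}),$$ where $h^i$ is the chopped part containing $x_i$ (whose root may have out-degree $1$) and $v_{x_i}$ is any one of the newly attached leaves of $h^{\mathit{top}}_{\mathit{ext}}$ whose parent is an ancestor of $x_i$ in $h$.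
   Context: A species tree $\mathcal{S}=(S,\boldsymbol{\tau})$ on $X$ is a rooted binary phylogenetic tree $S$ with leaf set $X$ and positive interval lengths $\tau_0,\dots,\tau_{n-2}$ between successive speciation events ($\tau_0$ from the leaves at time $0$ to the first speciation), so it is ultrametric with height $\eta=\tau_0+\cdots+\tau_{n-2}$. A gene tree history $h$ evolving within $\mathcal{S}$ is an ultrametric rooted binary tree with leaf set $X$ (leaves at time $0$) whose internal vertices are coalescent events placed at specific times within populations (branches) of $\mathcal{S}$ or above its root; its edge lengths are given by these times, and its root lies above height $\eta$. Cutting $h$ at height $\eta'$: every edge of $h$ present at time $\eta'$ is subdivided into two edges at that time, disconnecting $h$; if an internal vertex $v$ of $h$ lies exactly at time $\eta'$, it is split into two copies, one being the root of the subtree with the outgoing (descendant) edges and the other a new leaf on the incoming edge. This yields a forest; the tree containing the root of $h$ is the top part $h^{\mathit{top}}$, and the other trees $h^1,\dots,h^k$ are the chopped parts. The extended top part $h^{\mathit{top}}_{\mathit{ext}}$ is obtained from $h^{\mathit{top}}$ by attaching to each leaf $\ell$ of $h^{\mathit{top}}$, via edges of length $0$, as many new leaves as $\ell$ had descendant leaves in $h$ (the result may be non-binary and contain degree-2 vertices). For a rooted tree $T$ with root $\rho$ and nonnegative edge lengths $l(e)$, the Fair Proportion index is $FP_T(x)=\sum_{e\in P(T;\rho,x)} l(e)/n(e)$, where $P(T;\rho,x)$ is the path from $\rho$ to leaf $x$ and $n(e)$ is the number of leaves of $T$ descending from $e$. *)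

(* Defs.v *)
From mathcomp Require Import all_boot all_order all_algebra.
Set Implicit Arguments. Unset Strict Implicit. Unset Printing Implicit Defensive.
Import Order.TTheory GRing.Theory Num.Theory.
Local Open Scope ring_scope.

(* A rooted binary tree whose internal vertices (speciation events) carry their
   rank k in 1..n-1 (the k-th speciation event going back in time). *)
Inductive stree (L : Type) := SLeaf of L | SNode of nat & stree L & stree L.
Arguments SLeaf {L}. Arguments SNode {L}.

Fixpoint sleaves (L : Type) (S : stree L) : seq L :=
  match S with SLeaf x => [:: x] | SNode _ l r => sleaves l ++ sleaves r end.

Fixpoint sranks (L : Type) (S : stree L) : seq nat :=
  match S with SLeaf _ => [::] | SNode k l r => k :: sranks l ++ sranks r end.

Fixpoint sranked (L : Type) (S : stree L) : bool :=
  match S with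
  | SLeaf _ => true
  | SNode k l r => all (fun j => (j < k)%N) (sranks l ++ sranks r)
                   && sranked l && sranked r
  end.

Fixpoint sexists (L : Type) (P : stree L -> Prop) (S : stree L) : Prop :=
  P S \/ match S with SLeaf _ => False | SNode _ l r => sexists P l \/ sexists P r end.

(* time (height) of the root of a subtree of the species tree, given the
   interval lengths tau_0, ..., tau_(n-2) *)
Definition stime (R : realFieldType) (n : nat) (tau : 'I_n.-1 -> R)
  (L : Type) (S : stree L) : R :=
  match S with
  | SLeaf _ => 0
  | SNode k _ _ => \sum_(i < n.-1 | (i < k)%N) tau i
  end.

Definition sheight (R : realFieldType) (n : nat) (tau : 'I_n.-1 -> R) : R :=
  \sum_(i < n.-1) tau i.

Definition species_tree (R : realFieldType) (n : nat)
  (S : stree 'I_n) (tau : 'I_n.-1 -> R) : Prop :=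
  [/\ perm_eq (sleaves S) (enum 'I_n),
      perm_eq (sranks S) (iota 1 n.-1),
      sranked S &
      forall i, 0 < tau i].

Inductive gtree (R L : Type) := GLeaf of L | GNode of R & gtree R L & gtree R L.
Arguments GLeaf {R L}. Arguments GNode {R L}.

Definition gtime (R : realFieldType) (L : Type) (h : gtree R L) : R :=
  match h with GLeaf _ => 0 | GNode t _ _ => t end.

Fixpoint gleaves (R L : Type) (h : gtree R L) : seq L :=
  match h with GLeaf x => [:: x] | GNode _ l r => gleaves l ++ gleaves r end.

Fixpoint gforall (R L : Type) (P : gtree R L -> Prop) (h : gtree R L) : Prop :=
  P h /\ match h with GLeaf _ => True | GNode _ l r => gforall P l /\ gforall P r end.

(* h is a gene tree history evolving within the species tree (S, tau):
   leaf set X (each leaf once, at time 0), coalescent times strictly increase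
   towards the root, every coalescent event lies in a population of S (or above
   its root) containing all lineages it merges, i.e. at a time no earlier than
   the speciation event at the root of some clade of S containing all leaves
   below it; and the root of h lies above the height eta of S. *)
Definition gene_tree_history (R : realFieldType) (n : nat)
  (S : stree 'I_n) (tau : 'I_n.-1 -> R) (h : gtree R 'I_n) : Prop :=
  [/\ perm_eq (gleaves h) (enum 'I_n),
      gforall (fun v => match v with
                        | GLeaf _ => True
                        | GNode t l r =>
                            [/\ gtime l < t, gtime r < t &
                                sexists (fun w => {subset gleaves v <= sleaves w}
                                                  /\ stime tau w <= t) S]
                        end) h &
      sheight tau < gtime h].

Inductive wtree (R L : Type) := WLeaf of L | WNode of seq (R * wtree R L).
Arguments WLeaf {R L}. Arguments WNode {R L}.

Fixpoint wleaves (R L : Type) (T : wtree R L) : seq L :=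
  match T with
  | WLeaf x => [:: x]
  | WNode cs => (fix go (cs : seq (R * wtree R L)) : seq L :=
                   match cs with
                   | [::] => [::]
                   | (_, c) :: cs' => wleaves c ++ go cs'
                   end) cs
  end.

Fixpoint FP (R : realFieldType) (L : eqType) (T : wtree R L) (x : L) : R :=
  match T with
  | WLeaf _ => 0
  | WNode cs => (fix go (cs : seq (R * wtree R L)) : R :=
                   match cs with
                   | [::] => 0
                   | (l, c) :: cs' =>
                       (if x \in wleaves c
                        then l / (size (wleaves c))%:R + FP c x
                        else 0) + go cs'
                   end) cs
  end.

Fixpoint gtree_w (R : realFieldType) (L : Type) (h : gtree R L) : wtree R L :=
  match h with
  | GLeaf x => WLeaf x
  | GNode t l r => WNode [:: (t - gtime l, gtree_w l); (t - gtime r, gtree_w r)]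
  end.

(* A subtree whose root lies at time <= c becomes a leaf of the top part (at
   time c), to which are attached, by edges of length 0, one new leaf for each
   leaf of h below it (the new leaves are named after these descendant leaves).
   Edges of the top part going down to such a leaf have length (t - c). *)
Fixpoint top_ext (R : realFieldType) (L : Type) (c : R) (h : gtree R L)
  : wtree R L :=
  match h with
  | GLeaf y => WNode [:: (0, WLeaf y)]
  | GNode t l r =>
      if t <= c then WNode [seq (0, WLeaf y) | y <- gleaves h]
      else WNode [:: (t - Num.max (gtime l) c, top_ext c l);
                     (t - Num.max (gtime r) c, top_ext c r)]
  end.

(* Chopped parts of h concerning cut height c: for a maximal subtree rooted
   strictly below c, the edge above it is subdivided at time c, giving a
   chopped part whose root (at c) has out-degree 1; a vertex exactly at time c
   is split and its descendant copy is the root of the chopped part. *)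
Fixpoint chopped (R : realFieldType) (L : Type) (c : R) (h : gtree R L)
  : seq (wtree R L) :=
  match h with
  | GLeaf y => [:: WNode [:: (c, WLeaf y)]]
  | GNode t l r =>
      if t < c then [:: WNode [:: (c - t, gtree_w h)]]
      else if t == c then [:: gtree_w h]
      else chopped c l ++ chopped c r
  end.

Definition is_chopped_part (R : realFieldType) (L : Type) (c : R)
  (h : gtree R L) (P : wtree R L) : Prop :=
  exists2 i, (i < size (chopped c h))%N & nth (WNode [::]) (chopped c h) i = P.

(* Main.v *)
Require Import Defs.
From mathcomp Require Import all_boot all_order all_algebra.
From mathcomp Require Import ring lra.
From Stdlib Require List.
Import Order.TTheory GRing.Theory Num.Theory.
Local Open Scope ring_scope.

Section Aux.
Variable R : realFieldType.
Variable L : eqType.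
Implicit Types (g : gtree R L) (c : R).

Lemma wleaves_gw g : wleaves (gtree_w g) = gleaves g.
Proof. elim: g => [z|t l IHl r IHr] //=; by rewrite ?cats0 IHl IHr. Qed.

Lemma wleaves_map0 (s : seq L) :
  wleaves (WNode [seq ((0:R), @WLeaf R L y) | y <- s]) = s.
Proof. elim: s => [|a s IH] //=. by move: IH => /= ->. Qed.

Lemma FP_map0 (s : seq L) x :
  FP (WNode [seq ((0:R), @WLeaf R L y) | y <- s]) x = 0.
Proof.
elim: s => [|a s IH] //=. move: IH => /= ->.
by case: ifP => _; rewrite ?mul0r ?addr0.
Qed.

Lemma wleaves_top c g : wleaves (top_ext c g) = gleaves g.
Proof.
elim: g => [z|t l IHl r IHr] //=.
case: ifP => _; first by rewrite wleaves_map0.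
by rewrite /= cats0 IHl IHr.
Qed.

Lemma wleaves_single (a : R) (T : wtree R L) : wleaves (WNode [:: (a, T)]) = wleaves T.
Proof. by rewrite /= ?cats0. Qed.

Lemma wleaves_pair (a b : R) (A B : wtree R L) :
  wleaves (WNode [:: (a, A); (b, B)]) = wleaves A ++ wleaves B.
Proof. by rewrite /= ?cats0. Qed.

Lemma In_nth (d : wtree R L) s i : (i < size s)%N -> List.In (nth d s i) s.
Proof.
elim: s i => [|a s IH] [|i] //= H; first by left.
by right; apply: IH.
Qed.

Lemma chopped_leaves c g P : List.In P (chopped c g) ->
  {subset wleaves P <= gleaves g}.
Proof.
elim: g P => [z|t l IHl r IHr] P /=.
  by case=> // <- x /=; rewrite ?cats0.
case: ifP => _.
  by case=> // <- x; rewrite wleaves_single wleaves_pair !wleaves_gw.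
case: ifP => _.
  by case=> // <- x; rewrite wleaves_pair !wleaves_gw.
move/List.in_app_iff => [H|H] x Hx; rewrite mem_cat.
  by rewrite (IHl _ H x Hx).
by rewrite (IHr _ H x Hx) orbT.
Qed.

Lemma top_le0 c (l : gtree R L) y : gtime l <= c -> FP (top_ext c l) y = 0.
Proof.
case: l => [z|t' l' r'] /= H.
  by case: ifP => _; rewrite ?mul0r ?addr0.
by rewrite H FP_map0.
Qed.

Lemma chopped_lt c (l : gtree R L) : 0 < c -> gtime l < c ->
  chopped c l = [:: WNode [:: (c - gtime l, gtree_w l)]].
Proof. by case: l => [z|t' l' r'] /= c0 H; rewrite ?subr0 ?H. Qed.

Lemma chopped_eq c (l : gtree R L) : 0 < c -> gtime l = c ->
  chopped c l = [:: gtree_w l].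
Proof.
case: l => [z|t' l' r'] /= c0 H.
  by exfalso; move: c0; rewrite -H ltxx.
by rewrite H ltxx eqxx.
Qed.

Lemma FP_single (a : R) (T : wtree R L) x :
  FP (WNode [:: (a, T)]) x =
  if x \in wleaves T then a / (size (wleaves T))%:R + FP T x else 0.
Proof. by rewrite /= addr0. Qed.

Lemma side c t (l : gtree R L) (P : wtree R L) (x y : L) :
  0 < c -> c < t -> List.In P (chopped c l) ->
  x \in wleaves P -> y \in wleaves P ->
  (c < gtime l -> FP (gtree_w l) x = FP P x + FP (top_ext c l) y) ->
  (t - gtime l) / (size (gleaves l))%:R + FP (gtree_w l) x =
  FP P x + ((t - Num.max (gtime l) c) / (size (gleaves l))%:R
            + FP (top_ext c l) y).
Proof.
move=> c0 ct HP Hx Hy IH.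
have [lt|le] := ltP c (gtime l).
  rewrite IH //. ring.
idtac.
rewrite top_le0 // addr0.
case: (ltgtP (gtime l) c) le => [lt|gt|eq] le.
- move: HP Hx; rewrite chopped_lt // => -[<-|//].
  rewrite FP_single wleaves_single !wleaves_gw => ->. ring.
- by [].
- move: HP; rewrite chopped_eq // => -[<-|//]. rewrite eq. ring.
Qed.

Lemma main c g : 0 < c -> uniq (gleaves g) -> c < gtime g ->
  forall P, List.In P (chopped c g) ->
  forall x y, x \in wleaves P -> y \in wleaves P ->
  FP (gtree_w g) x = FP P x + FP (top_ext c g) y.
Proof.
move=> c0; elim: g => [z|t l IHl r IHr] /=.
  by move=> _ H; exfalso; move: (lt_trans c0 H); rewrite ltxx.
rewrite cat_uniq => /and3P [ul dis ur] ct.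
rewrite (lt_geF ct) ltNge (ltW ct) /= (gt_eqF ct).
move=> P /List.in_app_iff [H|H] x y Hx Hy.
  have xl := @chopped_leaves c _ _ H _ Hx. have yl := @chopped_leaves c _ _ H _ Hy.
  have xr : x \notin gleaves r.
    by apply/negP => xr; move/hasP: dis; apply; exists x.
  have yr : y \notin gleaves r.
    by apply/negP => yr; move/hasP: dis; apply; exists y.
  rewrite /= !wleaves_gw !wleaves_top xl yl (negbTE xr) (negbTE yr) !addr0.
  by apply: side => // ct'; apply: IHl.
have xr := @chopped_leaves c _ _ H _ Hx. have yr := @chopped_leaves c _ _ H _ Hy.
have xl : x \notin gleaves l by apply: (hasPn dis).
have yl : y \notin gleaves l by apply: (hasPn dis).
rewrite /= !wleaves_gw !wleaves_top xr yr (negbTE xl) (negbTE yl) !add0r !addr0.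
by apply: side => // ct'; apply: IHr.
Qed.

End Aux.

Theorem lemma1 (R : realFieldType) (n : nat) (S : stree 'I_n)
  (tau : 'I_n.-1 -> R) (h : gtree R 'I_n) (eta' : R) :
  species_tree S tau ->
  gene_tree_history S tau h ->
  0 < eta' -> eta' <= sheight tau ->
  forall P : wtree R 'I_n, is_chopped_part eta' h P ->
  forall x y : 'I_n, x \in wleaves P -> y \in wleaves P ->
  FP (gtree_w h) x = FP P x + FP (top_ext eta' h) y.
Proof.
move=> _ [perm _ hgt] c0 ce P [i Hi <-] x y Hx Hy.
apply: main => //.
- by rewrite (perm_uniq perm) enum_uniq.
- exact: le_lt_trans hgt.
- exact: In_nth.
Qed.
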